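(* Let $\ell>0$ and let $M$ have local coordinates $(x,y,\alpha,\beta)$ with $\cos\alpha\neq0$, $\cos\beta\neq0$. Let $X_3=\partial_\beta$ and $X_4=-\sin\beta\,\partial_\alpha+\ell\cos\beta(\cos\alpha\,\partial_x+\sin\alpha\,\partial_y)$. Then the change of coordinates $(x,y,\alpha,\beta)\mapsto(x,y,p,q)$ with $p=\tan\alpha$, $q=-\ell^{-1}\tan\beta\sec^3\alpha$ is a local diffeomorphism which maps $\mathrm{Span}(X_3)$ to $\mathrm{Span}(\partial_q)$ and $\mathrm{Span}(X_4)$ to $\mathrm{Span}\big(\partial_x+p\partial_y+q\partial_p+\tfrac{3pq^2}{1+p^2}\partial_q\big)$. Consequently, the Engel structure with a split $(M,\mathrm{Span}(X_3)\oplus\mathrm{Span}(X_4))$ is locally equivalent to the Engel structure with a split on the second jet space $\mathcal{J}^2$ (coordinates $(x,y,p=y',q=y'')$) associated with the third order ODE $y'''=\frac{3y'y''^2}{1+y'^2}$, given by the vertical direction $\partial_q$ and the total derivative direction of the equation; and the general solution of this ODE is $\nu(x^2+y^2)-2\xi x-2\eta y+\mu=0$ with real constants $\nu,\xi,\eta,\mu$, i.e. its solution graphs are circles and straight lines in the $(x,y)$-plane.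
   Context: An Engel structure with a split is a 4-manifold with a rank 2 distribution $\mathcal{D}$ whose derived flag has constant ranks $2,3,4$, together with a splitting $\mathcal{D}=\mathcal{D}_1\oplus\mathcal{D}_2$ into rank one subdistributions; two such are locally equivalent if a local diffeomorphism carries $\mathcal{D}_1$ to $\bar{\mathcal{D}}_1$ and $\mathcal{D}_2$ to $\bar{\mathcal{D}}_2$. For an ODE $y'''=F(x,y,y',y'')$ on $\mathcal{J}^2$ with coordinates $(x,y,p,q)$, the associated split is $\mathrm{Span}(\partial_q)\oplus\mathrm{Span}(\partial_x+p\partial_y+q\partial_p+F\partial_q)$. *)

(* Defs.v *)
From Stdlib Require Import Reals List.
From Coquelicot Require Import Coquelicot.
Open Scope R_scope.

Definition pt := (R * R * R * R)%type.

Inductive idx := I1 | I2 | I3 | I4.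

Definition coord (p : pt) (i : idx) : R :=
  let '(a, b, c, d) := p in
  match i with I1 => a | I2 => b | I3 => c | I4 => d end.

Definition upd (p : pt) (i : idx) (t : R) : pt :=
  let '(a, b, c, d) := p in
  match i with
  | I1 => (t, b, c, d) | I2 => (a, t, c, d)
  | I3 => (a, b, t, d) | I4 => (a, b, c, t) end.

Definition vec4 (f : idx -> R) : pt := (f I1, f I2, f I3, f I4).

Definition pd (i : idx) (f : pt -> R) : pt -> R :=
  fun p => Derive (fun t => f (upd p i t)) (coord p i).

Fixpoint iter_pd (ds : list idx) (f : pt -> R) : pt -> R :=
  match ds with nil => f | i :: ds' => pd i (iter_pd ds' f) end.

Definition smooth_on (U : pt -> Prop) (f : pt -> R) : Prop :=
  forall (ds : list idx) (p : pt), U p ->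
    continuous (iter_pd ds f) p /\
    (forall i, ex_derive (fun t => iter_pd ds f (upd p i t)) (coord p i)).

Definition smooth_map_on (U : pt -> Prop) (F : pt -> pt) : Prop :=
  forall k, smooth_on U (fun p => coord (F p) k).

Definition push (F : pt -> pt) (m v : pt) : pt :=
  vec4 (fun k =>
    coord v I1 * pd I1 (fun q => coord (F q) k) m +
    coord v I2 * pd I2 (fun q => coord (F q) k) m +
    coord v I3 * pd I3 (fun q => coord (F q) k) m +
    coord v I4 * pd I4 (fun q => coord (F q) k) m).

Definition scal4 (t : R) (v : pt) : pt := vec4 (fun k => t * coord v k).

Definition same_span (v w : pt) : Prop :=
  forall u, (exists t, u = scal4 t v) <-> (exists t, u = scal4 t w).

Definition local_diffeo (V W : pt -> Prop) (F G : pt -> pt) : Prop :=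
  open V /\ open W /\
  (forall p, V p -> W (F p)) /\ (forall q, W q -> V (G q)) /\
  (forall p, V p -> G (F p) = p) /\ (forall q, W q -> F (G q) = q) /\
  smooth_map_on V F /\ smooth_map_on W G.

Definition carries_split (V : pt -> Prop) (F : pt -> pt) (X1 X2 Y1 Y2 : pt -> pt) : Prop :=
  forall m, V m ->
    same_span (push F m (X1 m)) (Y1 (F m)) /\ same_span (push F m (X2 m)) (Y2 (F m)).

Definition loc_equiv_split (U : pt -> Prop) (X1 X2 : pt -> pt)
    (Ubar : pt -> Prop) (Y1 Y2 : pt -> pt) : Prop :=
  forall m, U m -> exists V W F G,
    V m /\ (forall p, V p -> U p) /\ (forall q, W q -> Ubar q) /\
    local_diffeo V W F G /\ carries_split V F X1 X2 Y1 Y2.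

Definition Mdom (m : pt) : Prop := cos (coord m I3) <> 0 /\ cos (coord m I4) <> 0.

Definition X3 (m : pt) : pt := (0, 0, 0, 1).

Definition X4 (l : R) (m : pt) : pt :=
  let al := coord m I3 in let be := coord m I4 in
  (l * cos be * cos al, l * cos be * sin al, - sin be, 0).

Definition Phi (l : R) (m : pt) : pt :=
  let al := coord m I3 in let be := coord m I4 in
  (coord m I1, coord m I2, tan al, - / l * tan be * (/ cos al) ^ 3).

Definition J2 (n : pt) : Prop := True.

Definition vert (n : pt) : pt := (0, 0, 0, 1).

Definition totD (F : pt -> R) (n : pt) : pt := (1, coord n I3, coord n I4, F n).

Definition Fode (n : pt) : R :=
  let p := coord n I3 in let q := coord n I4 in 3 * p * q ^ 2 / (1 + p ^ 2).

Definition C3_on (a b : Rbar) (y : R -> R) : Prop :=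
  forall x : R, Rbar_lt a x -> Rbar_lt x b ->
    ex_derive_n y 1 x /\ ex_derive_n y 2 x /\ ex_derive_n y 3 x.

Definition solves_ode (F : pt -> R) (a b : Rbar) (y : R -> R) : Prop :=
  C3_on a b y /\
  forall x : R, Rbar_lt a x -> Rbar_lt x b ->
    Derive_n y 3 x = F (x, y x, Derive_n y 1 x, Derive_n y 2 x).

(* Main.v *)
Require Import Defs.
From Stdlib Require Import Reals List Lra Lia ZArith.
From Coquelicot Require Import Coquelicot.
Open Scope R_scope.

Inductive fexpr :=
 | EC (c : R) | EV (i : idx) | EA (e1 e2 : fexpr) | EM (e1 e2 : fexpr)
 | ES (e : fexpr) | ECo (e : fexpr) | EI (e : fexpr) | EAt (e : fexpr).

Fixpoint eval (e : fexpr) (p : pt) : R :=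
  match e with
  | EC c => c | EV i => coord p i
  | EA e1 e2 => eval e1 p + eval e2 p
  | EM e1 e2 => eval e1 p * eval e2 p
  | ES e => sin (eval e p) | ECo e => cos (eval e p)
  | EI e => / eval e p | EAt e => atan (eval e p) end.

Definition idx_eqb (i j : idx) : bool :=
  match i, j with
  | I1, I1 | I2, I2 | I3, I3 | I4, I4 => true | _, _ => false end.

Fixpoint Dp (i : idx) (e : fexpr) : fexpr :=
  match e with
  | EC _ => EC 0
  | EV j => EC (if idx_eqb i j then 1 else 0)
  | EA e1 e2 => EA (Dp i e1) (Dp i e2)
  | EM e1 e2 => EA (EM (Dp i e1) e2) (EM e1 (Dp i e2))
  | ES e => EM (ECo e) (Dp i e)
  | ECo e => EM (EM (EC (-1)) (ES e)) (Dp i e)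
  | EI e => EM (EM (EC (-1)) (EM (EI e) (EI e))) (Dp i e)
  | EAt e => EM (EI (EA (EC 1) (EM e e))) (Dp i e)
  end.

Fixpoint wf (e : fexpr) (p : pt) : Prop :=
  match e with
  | EC _ | EV _ => True
  | EA e1 e2 | EM e1 e2 => wf e1 p /\ wf e2 p
  | ES e | ECo e | EAt e => wf e p
  | EI e => eval e p <> 0 /\ wf e p end.

Lemma wf_D i e p : wf e p -> wf (Dp i e) p.
Proof.
  induction e; simpl; intuition.
  assert (0 <= eval e p * eval e p) by nra. lra.
Qed.

Lemma coord_upd p i s j : coord (upd p i s) j = if idx_eqb i j then s else coord p j.
Proof. destruct p as [[[a b] c] d]; destruct i, j; reflexivity. Qed.

Lemma upd_coord p i : upd p i (coord p i) = p.
Proof. destruct p as [[[a b] c] d]; destruct i; reflexivity. Qed.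

Lemma upd_upd p i s t : upd (upd p i s) i t = upd p i t.
Proof. destruct p as [[[a b] c] d]; destruct i; reflexivity. Qed.

Lemma coord_upd_same p i t : coord (upd p i t) i = t.
Proof. destruct p as [[[a b] c] d]; destruct i; reflexivity. Qed.

Lemma is_derive_eq (f : R -> R) (x l l' : R) : is_derive f x l -> l = l' -> is_derive f x l'.
Proof. intros H <-; exact H. Qed.

Lemma d_const (c x : R) : is_derive (fun _ => c) x 0.
Proof. eapply is_derive_eq. apply is_derive_const. reflexivity. Qed.
Lemma d_id (x : R) : is_derive (fun s => s) x 1.
Proof. eapply is_derive_eq. apply is_derive_id. reflexivity. Qed.
Lemma d_plus (f g : R -> R) x df dg : is_derive f x df -> is_derive g x dg ->
  is_derive (fun s => f s + g s) x (df + dg).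
Proof. intros. eapply is_derive_eq. eapply is_derive_ext. 2: apply (is_derive_plus f g); eauto.
  intro; reflexivity. reflexivity. Qed.
Lemma d_mult (f g : R -> R) x df dg : is_derive f x df -> is_derive g x dg ->
  is_derive (fun s => f s * g s) x (df * g x + f x * dg).
Proof. intros. eapply is_derive_eq. eapply is_derive_ext. 2: apply (is_derive_mult f g); eauto.
  intro; reflexivity. intros; apply Rmult_comm. reflexivity. Qed.
Lemma d_comp (f g : R -> R) x df dg : is_derive f (g x) df -> is_derive g x dg ->
  is_derive (fun s => f (g s)) x (df * dg).
Proof. intros. eapply is_derive_eq. eapply is_derive_ext. 2: apply (is_derive_comp f g); eauto.
  intro; reflexivity.
  unfold scal; simpl; unfold mult; simpl. apply Rmult_comm. Qed.

Lemma eval_deriv i e p t : wf e (upd p i t) ->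
  is_derive (fun s => eval e (upd p i s)) t (eval (Dp i e) (upd p i t)).
Proof.
  induction e; simpl; intros H.
  - apply d_const.
  - eapply is_derive_ext. { intro s. symmetry. apply coord_upd. }
    destruct (idx_eqb i i0).
    + apply d_id.
    + apply d_const.
  - destruct H. apply d_plus; eauto.
  - destruct H. apply d_mult; eauto.
  - eapply is_derive_eq. apply (d_comp sin). apply is_derive_sin. eauto. ring.
  - eapply is_derive_eq. apply (d_comp cos). apply is_derive_cos. eauto. ring.
  - destruct H. eapply is_derive_eq. apply (d_comp Rinv). 2: eauto.
    eapply is_derive_eq. apply (is_derive_inv (fun s => s)). apply d_id. auto. reflexivity.
    field. auto.
  - eapply is_derive_eq. apply (d_comp atan). apply is_derive_atan. eauto.
    reflexivity.
Qed.

Lemma coord_cont (i : idx) (p : pt) : continuous (fun q : pt => coord q i) p.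
Proof.
  destruct p as [[[a b] c] d].
  destruct i.
  - apply (continuous_ext (fun q : pt => fst (fst (fst q)))). { intros [[[x y] z] w]. reflexivity. }
    apply (continuous_comp (fun q : pt => fst (fst q)) fst).
    apply (continuous_comp fst fst). apply continuous_fst. apply continuous_fst. apply continuous_fst.
  - apply (continuous_ext (fun q : pt => snd (fst (fst q)))). { intros [[[x y] z] w]. reflexivity. }
    apply (continuous_comp (fun q : pt => fst (fst q)) snd).
    apply (continuous_comp fst fst). apply continuous_fst. apply continuous_fst. apply continuous_snd.
  - apply (continuous_ext (fun q : pt => snd (fst q))). { intros [[[x y] z] w]. reflexivity. }
    apply (continuous_comp fst snd). apply continuous_fst. apply continuous_snd.
  - apply (continuous_ext (fun q : pt => snd q)). { intros [[[x y] z] w]. reflexivity. }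
    apply continuous_snd.
Qed.

Lemma cont_R (f : R -> R) (x : R) : (forall y, ex_derive f y) -> continuous f x.
Proof. intros H. exact (ex_derive_continuous f x (H x)). Qed.

Lemma eval_cont e p : wf e p -> continuous (eval e) p.
Proof.
  induction e; simpl; intros H.
  - apply continuous_const.
  - apply coord_cont.
  - destruct H. apply (continuous_plus (eval e1) (eval e2)); auto.
  - destruct H. apply (continuous_mult (eval e1) (eval e2)); auto.
  - apply (continuous_comp (eval e) sin); auto. apply cont_R. intro; eexists; apply is_derive_sin.
  - apply (continuous_comp (eval e) cos); auto. apply cont_R. intro; eexists; apply is_derive_cos.
  - destruct H. apply (continuous_comp (eval e) Rinv); auto. apply continuous_Rinv; auto.
  - apply (continuous_comp (eval e) atan); auto. apply cont_R. intro; eexists; apply is_derive_atan.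
Qed.

Lemma pd_eval i f e p : (forall q, f q = eval e q) -> wf e p -> pd i f p = eval (Dp i e) p.
Proof.
  intros Hf Hw. unfold pd.
  rewrite (Derive_ext _ (fun t => eval e (upd p i t))) by (intro; apply Hf).
  apply is_derive_unique. pose proof (eval_deriv i e p (coord p i)) as H.
  rewrite !upd_coord in H. auto.
Qed.

Lemma upd_near (U : pt -> Prop) p i : open U -> U p -> locally (coord p i) (fun t => U (upd p i t)).
Proof.
  intros HU Hp. destruct (HU p Hp) as [eps He].
  exists eps. intros t Ht. apply He.
  destruct p as [[[a b] c] d]; destruct i; simpl in *;
  repeat split; try apply ball_center; exact Ht.
Qed.

Fixpoint Dl (ds : list idx) (e : fexpr) : fexpr :=
  match ds with nil => e | i :: ds' => Dp i (Dl ds' e) end.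

Lemma wf_Dl ds e p : wf e p -> wf (Dl ds e) p.
Proof. induction ds; simpl; auto. intros; apply wf_D; auto. Qed.

Lemma iter_eval U f e : open U -> (forall p, U p -> f p = eval e p) -> (forall p, U p -> wf e p) ->
  forall ds p, U p -> iter_pd ds f p = eval (Dl ds e) p.
Proof.
  intros HU Hf Hw ds. induction ds as [|i ds IH]; simpl; intros p Hp; auto.
  unfold pd.
  rewrite (Derive_ext_loc _ (fun t => eval (Dl ds e) (upd p i t))).
  - apply is_derive_unique. pose proof (eval_deriv i (Dl ds e) p (coord p i)) as H.
    rewrite !upd_coord in H. apply H. apply wf_Dl; auto.
  - generalize (upd_near U p i HU Hp). apply filter_imp. intros t Ht. apply IH; auto.
Qed.

Lemma smooth_expr U f e : open U -> (forall p, U p -> f p = eval e p) -> (forall p, U p -> wf e p) ->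
  smooth_on U f.
Proof.
  intros HU Hf Hw ds p Hp. split.
  - apply (continuous_ext_loc _ (eval (Dl ds e))).
    + generalize (HU p Hp). apply filter_imp. intros q Hq. symmetry. apply (iter_eval U f e); auto.
    + apply eval_cont. apply wf_Dl; auto.
  - intro i. exists (eval (Dp i (Dl ds e)) p).
    apply (is_derive_ext_loc (fun t => eval (Dl ds e) (upd p i t))).
    + generalize (upd_near U p i HU Hp). apply filter_imp. intros t Ht. symmetry. apply (iter_eval U f e); auto.
    + pose proof (eval_deriv i (Dl ds e) p (coord p i)) as H.
      rewrite !upd_coord in H. apply H. apply wf_Dl; auto.
Qed.

Lemma trig_nat x n : cos (x + INR n * PI) = (-1)^n * cos x /\ sin (x + INR n * PI) = (-1)^n * sin x.
Proof.
  induction n as [|n [IH1 IH2]].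
  - simpl. rewrite Rmult_0_l, Rplus_0_r. split; ring.
  - rewrite S_INR. replace (x + (INR n + 1) * PI) with ((x + INR n * PI) + PI) by ring.
    rewrite neg_cos, neg_sin, IH1, IH2. simpl. split; ring.
Qed.

Lemma pow_m1_sq n : (-1)^n * (-1)^n = 1.
Proof. rewrite <- Rpow_mult_distr. replace (-1 * -1) with 1 by ring. apply pow1. Qed.

Lemma trig_Z x z : exists s, s * s = 1 /\ cos (x + IZR z * PI) = s * cos x /\ sin (x + IZR z * PI) = s * sin x.
Proof.
  destruct (Z_le_gt_dec 0 z) as [Hz|Hz].
  - destruct (Z_of_nat_complete z Hz) as [n ->]. rewrite <- INR_IZR_INZ.
    exists ((-1)^n). split. apply pow_m1_sq. apply trig_nat.
  - assert (Hz' : (0 <= - z)%Z) by lia.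
    destruct (Z_of_nat_complete _ Hz') as [n Hn].
    replace z with (- Z.of_nat n)%Z by lia. rewrite opp_IZR, <- INR_IZR_INZ.
    destruct (trig_nat (x - INR n * PI) n) as [H1 H2].
    replace (x - INR n * PI + INR n * PI) with x in H1, H2 by ring.
    exists ((-1)^n). split. apply pow_m1_sq.
    replace (x + - INR n * PI) with (x - INR n * PI) by ring.
    rewrite H1, H2. rewrite <- !Rmult_assoc, pow_m1_sq. split; ring.
Qed.

Lemma tan_Z x z : cos x <> 0 -> tan (x + IZR z * PI) = tan x.
Proof.
  intros Hc. destruct (trig_Z x z) as [s [Hs [H1 H2]]]. unfold tan. rewrite H1, H2.
  field. split; auto. intro; subst; lra.
Qed.

Lemma cos_Z_ne x z : cos x <> 0 -> cos (x + IZR z * PI) <> 0.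
Proof.
  intros Hc. destruct (trig_Z x z) as [s [Hs [H1 H2]]]. rewrite H1.
  apply Rmult_integral_contrapositive; split; auto. intro; subst; lra.
Qed.

Lemma cos_strip a z : IZR z * PI - PI/2 < a < IZR z * PI + PI/2 -> cos a <> 0.
Proof.
  intros H. replace a with ((a - IZR z * PI) + IZR z * PI) by ring.
  apply cos_Z_ne. apply Rgt_not_eq. apply cos_gt_0; lra.
Qed.

Lemma find_strip a : cos a <> 0 -> exists z, IZR z * PI - PI/2 < a < IZR z * PI + PI/2.
Proof.
  intros Hc. pose proof PI_RGT_0 as Hpi.
  destruct (archimed (a / PI + / 2)) as [H1 H2].
  set (n := up (a / PI + / 2)) in *.
  exists (n - 1)%Z. rewrite minus_IZR.
  assert (A1 : a / PI + /2 < IZR n) by lra.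
  assert (A2 : IZR n - 1 <= a / PI + /2) by lra.
  assert (B1 : a < IZR n * PI - PI/2).
  { apply (Rmult_lt_compat_r PI) in A1; auto.
    replace ((a / PI + / 2) * PI) with (a + PI/2) in A1 by (field; lra). lra. }
  assert (B2 : (IZR n - 1) * PI - PI/2 <= a).
  { apply (Rmult_le_compat_r PI) in A2; [|lra].
    replace ((a / PI + / 2) * PI) with (a + PI/2) in A2 by (field; lra). lra. }
  destruct (Rle_lt_or_eq_dec _ _ B2) as [B2'|B2'].
  - split; lra.
  - exfalso. apply Hc. apply cos_eq_0_1. exists (n - 2)%Z. rewrite minus_IZR. rewrite <- B2'. simpl. lra.
Qed.

Lemma open_preimage (f : pt -> R) (OD : R -> Prop) :
  (forall x, continuous f x) -> open OD -> open (fun x => OD (f x)).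
Proof. intros Hc HO x Hx. apply (Hc x). apply HO; auto. Qed.

Lemma open_coord_strip i c d : open (fun m : pt => c < coord m i < d).
Proof.
  apply (open_and (fun m => c < coord m i) (fun m => coord m i < d)).
  - apply (open_preimage (fun m => coord m i) (fun u => c < u)). intro; apply coord_cont. apply open_gt.
  - apply (open_preimage (fun m => coord m i) (fun u => u < d)). intro; apply coord_cont. apply open_lt.
Qed.

Definition ePhi (l : R) (k : idx) : fexpr :=
  match k with
  | I1 => EV I1 | I2 => EV I2
  | I3 => EM (ES (EV I3)) (EI (ECo (EV I3)))
  | I4 => EM (EM (EC (- / l)) (EM (ES (EV I4)) (EI (ECo (EV I4)))))
             (EM (EI (ECo (EV I3))) (EM (EI (ECo (EV I3))) (EI (ECo (EV I3)))))
  end.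

Lemma Phi_eval l k m : coord (Phi l m) k = eval (ePhi l k) m.
Proof. destruct m as [[[x y] a] b]; destruct k; simpl; unfold tan, Rdiv; ring. Qed.

Lemma ePhi_wf l k m : cos (coord m I3) <> 0 -> cos (coord m I4) <> 0 -> wf (ePhi l k) m.
Proof. intros; destruct k; simpl; tauto. Qed.

Lemma pd_Phi l i k m : Mdom m -> pd i (fun q => coord (Phi l q) k) m = eval (Dp i (ePhi l k)) m.
Proof. intros [H1 H2]. apply pd_eval. intro; apply Phi_eval. apply ePhi_wf; auto. Qed.

Lemma scal4_scal4 a b w : scal4 a (scal4 b w) = scal4 (a * b) w.
Proof. destruct w as [[[x y] z] t]; unfold scal4, vec4; simpl; f_equal; [f_equal; [f_equal|]|]; ring. Qed.

Lemma same_span_scal c v w : c <> 0 -> v = scal4 c w -> same_span v w.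
Proof.
  intros Hc ->. intro u; split; intros [t Ht]; subst.
  - exists (t * c). apply scal4_scal4.
  - exists (t / c). rewrite scal4_scal4. f_equal. field. auto.
Qed.

Lemma sc x : sin x ^ 2 = 1 - cos x ^ 2.
Proof. pose proof (sin2_cos2 x). unfold Rsqr in H. lra. Qed.

Lemma carries l : 0 < l -> carries_split Mdom (Phi l) X3 (X4 l) vert (totD Fode).
Proof.
  intros hl m Hm. assert (hl' : l <> 0) by lra. unfold push, vec4. rewrite !pd_Phi by auto.
  destruct Hm as [Ha Hb].
  destruct m as [[[x y] a] b]. simpl in Ha, Hb. split.
  - apply (same_span_scal (- / l * ((cos b)^2 + (sin b)^2) / (cos b)^2 * (/cos a)^3)).
    + assert (0 < l * l) by nra. assert (0 < cos b ^2) by (apply pow2_gt_0; auto).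
      assert (0 < cos a ^2) by (apply pow2_gt_0; auto).
      rewrite sc. replace (1 - cos b ^2 + cos b ^2) with 1 by ring.
      apply Rmult_integral_contrapositive; split; [|apply pow_nonzero; apply Rinv_neq_0_compat; auto].
      unfold Rdiv. apply Rmult_integral_contrapositive; split.
      apply Rmult_integral_contrapositive; split. apply Ropp_neq_0_compat; apply Rinv_neq_0_compat; lra. lra.
      apply Rinv_neq_0_compat; lra.
    + unfold scal4, vec4, vert. simpl. f_equal; [f_equal; [f_equal|]|]. 1-3: ring.
      field. repeat split; assumption.
  - apply (same_span_scal (l * cos b * cos a)).
    + repeat apply Rmult_integral_contrapositive_currified; assumption.
    + unfold scal4, vec4, totD, Fode, Phi. simpl. unfold tan. f_equal; [f_equal; [f_equal|]|].
      * field.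
      * field. auto.
      * transitivity (- sin b * ((cos a * cos a + sin a * sin a) / (cos a * cos a))).
        field. repeat split; assumption.
        assert (Hca : sin a * sin a = 1 - cos a * cos a) by (pose proof (sc a); simpl in *; lra).
        rewrite Hca. field. repeat split; assumption.
      * assert (Hca : sin a * sin a = 1 - cos a * cos a) by (pose proof (sc a); simpl in *; lra).
        assert (Hk : 1 + sin a / cos a * (sin a / cos a * 1) = / (cos a * cos a)).
        { transitivity ((cos a * cos a + sin a * sin a) / (cos a * cos a)). field. auto.
          rewrite Hca. field. auto. }
        rewrite Hk. field. repeat split; assumption.
Qed.

Definition g3 (K : R) : fexpr := EA (EAt (EV I3)) (EC K).
Definition eG (K J l : R) (k : idx) : fexpr :=
  match k with
  | I1 => EV I1 | I2 => EV I2 | I3 => g3 K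
  | I4 => EA (EAt (EM (EM (EC (- l)) (EV I4)) (EM (ECo (g3 K)) (EM (ECo (g3 K)) (ECo (g3 K)))))) (EC J)
  end.
Definition Gm (K J l : R) (q : pt) : pt := vec4 (fun k => eval (eG K J l k) q).

Lemma Gm_coord K J l k q : coord (Gm K J l q) k = eval (eG K J l k) q.
Proof. destruct k; reflexivity. Qed.

Lemma atan_strip z x : IZR z * PI - PI/2 < atan x + IZR z * PI < IZR z * PI + PI/2.
Proof. destruct (atan_bound x). lra. Qed.

Lemma tan_strip z a : IZR z * PI - PI/2 < a < IZR z * PI + PI/2 -> atan (tan a) + IZR z * PI = a.
Proof.
  intros H. replace (tan a) with (tan (a - IZR z * PI)).
  - rewrite atan_tan by lra. ring.
  - replace a with ((a - IZR z * PI) + IZR z * PI) at 2 by ring. rewrite tan_Z. auto.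
    apply Rgt_not_eq. apply cos_gt_0; lra.
Qed.

Lemma cos_atan_ne u : cos (atan u) <> 0.
Proof.
  apply Rgt_not_eq. rewrite cos_atan. apply Rdiv_lt_0_compat. lra. apply sqrt_lt_R0.
  pose proof (Rle_0_sqr u). lra.
Qed.

Lemma part1 l : 0 < l -> forall m, Mdom m ->
  exists V W G, V m /\ (forall p, V p -> Mdom p) /\ local_diffeo V W (Phi l) G.
Proof.
  intros hl m [Ha Hb]. assert (hl' : l <> 0) by lra.
  destruct (find_strip _ Ha) as [k Hk]. destruct (find_strip _ Hb) as [j Hj].
  set (K := IZR k * PI) in *. set (J := IZR j * PI) in *.
  set (V := fun p : pt => K - PI/2 < coord p I3 < K + PI/2 /\ J - PI/2 < coord p I4 < J + PI/2).
  assert (HV : forall p, V p -> Mdom p).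
  { intros p [H1 H2]. split; eapply cos_strip; eauto. }
  exists V, (fun _ => True), (Gm K J l). split; [split; auto|]. split; auto.
  unfold local_diffeo. refine (conj _ (conj _ (conj _ (conj _ (conj _ (conj _ (conj _ _))))))).
  - apply (open_and (fun p : pt => K - PI/2 < coord p I3 < K + PI/2)); apply open_coord_strip.
  - apply open_true.
  - intros; exact I.
  - intros q _. destruct q as [[[x y] p] r]. unfold V, Gm, vec4. simpl. split; apply atan_strip.
  - intros p Hp. pose proof (HV p Hp) as [Hc3 Hc4]. destruct Hp as [H3 H4].
    destruct p as [[[x y] a] b]. simpl in *. unfold Gm, vec4, g3. simpl.
    assert (E3 : atan (tan a) + K = a) by (apply tan_strip; auto).
    rewrite E3. f_equal.
    replace (- l * (- / l * tan b * (/ cos a * (/ cos a * (/ cos a * 1)))) * (cos a * (cos a * cos a))) with (tan b)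
      by (field; split; assumption).
    apply tan_strip; auto.
  - intros q _. destruct q as [[[x y] p] r]. unfold Gm, vec4, g3, Phi. simpl.
    assert (Hc : cos (atan p + K) <> 0) by (apply cos_Z_ne; apply cos_atan_ne).
    unfold J, K in *. rewrite !tan_Z by apply cos_atan_ne. rewrite !tan_atan. f_equal. field. auto.
  - intro kk. apply (smooth_expr _ _ (ePhi l kk)).
    + apply (open_and (fun p : pt => K - PI/2 < coord p I3 < K + PI/2)); apply open_coord_strip.
    + intros; apply Phi_eval.
    + intros p Hp. destruct (HV p Hp). apply ePhi_wf; auto.
  - intro kk. apply (smooth_expr _ _ (eG K J l kk)).
    + apply open_true.
    + intros; apply Gm_coord.
    + intros; destruct kk; simpl; tauto.
Qed.

Definition inI (a b : Rbar) (t : R) := Rbar_lt a t /\ Rbar_lt t b.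

Lemma inI_between a b x y z : inI a b x -> inI a b y -> Rmin x y <= z <= Rmax x y -> inI a b z.
Proof.
  intros [H1 H2] [H3 H4] Hz. split.
  - destruct a as [a| |]; simpl in *; try tauto.
    assert (a < Rmin x y) by (apply Rmin_glb_lt; auto). lra.
  - destruct b as [b| |]; simpl in *; try tauto.
    assert (Rmax x y < b) by (apply Rmax_lub_lt; auto). lra.
Qed.

Lemma inI_loc a b x : inI a b x -> locally x (inI a b).
Proof.
  intros H. apply (open_and (T := R_UniformSpace) (fun t : R => Rbar_lt a t) (fun t : R => Rbar_lt t b)).
  apply open_Rbar_gt. apply open_Rbar_lt. exact H.
Qed.

Lemma const_on a b (f : R -> R) : (forall x, inI a b x -> is_derive f x 0) ->
  forall x y, inI a b x -> inI a b y -> f x = f y.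
Proof.
  intros Hd x y Hx Hy.
  destruct (MVT_gen f x y (fun _ => 0)) as [c [_ Hc]].
  - intros z Hz. apply Hd. apply (inI_between a b x y z); auto. lra.
  - intros z Hz. apply continuity_pt_filterlim.
    apply (ex_derive_continuous f z). exists 0. apply Hd. apply (inI_between a b x y z); auto.
  - lra.
Qed.

Lemma deriv_zero_on a b (g : R -> R) x d : (forall t, inI a b t -> g t = 0) -> inI a b x ->
  is_derive g x d -> d = 0.
Proof.
  intros Hg Hx Hd. apply is_derive_unique in Hd. rewrite <- Hd.
  rewrite (Derive_ext_loc _ (fun _ => 0)). apply Derive_const.
  generalize (inI_loc a b x Hx). apply filter_imp. auto.
Qed.

Ltac side := repeat split; try (eexists; eauto; fail); try assumption.
Section Core.
Variables (a b : Rbar) (y P Q T : R -> R).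
Hypothesis dy : forall t, inI a b t -> is_derive y t (P t).
Hypothesis dP : forall t, inI a b t -> is_derive P t (Q t).
Hypothesis dQ : forall t, inI a b t -> is_derive Q t (T t).

Lemma test nu xi eta mu x : inI a b x ->
  is_derive (fun t => nu * (t ^ 2 + (y t) ^ 2) - 2 * xi * t - 2 * eta * y t + mu) x
     (2 * nu * x + 2 * nu * y x * P x - 2 * xi - 2 * eta * P x).
Proof.
  intros Hx. auto_derive. side.
  change (Derive (fun x0 => y x0) x) with (Derive y x).
  rewrite (is_derive_unique _ _ _ (dy _ Hx)). ring.
Qed.
Lemma onepp (p : R) : 0 < 1 + p ^ 2.
Proof. pose proof (pow2_ge_0 p). lra. Qed.

Lemma conv_core nu xi eta mu : (nu, xi, eta, mu) <> (0, 0, 0, 0) ->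
  (forall t, inI a b t -> nu * (t ^ 2 + (y t) ^ 2) - 2 * xi * t - 2 * eta * y t + mu = 0) ->
  forall x, inI a b x -> T x = 3 * P x * Q x ^ 2 / (1 + P x ^ 2).
Proof.
  intros Hnz HG x Hx.
  assert (E1 : forall t, inI a b t -> 2 * nu * t + 2 * nu * y t * P t - 2 * xi - 2 * eta * P t = 0).
  { intros t Ht. apply (deriv_zero_on a b (fun t => nu * (t ^ 2 + (y t) ^ 2) - 2 * xi * t - 2 * eta * y t + mu) t).
    exact HG. exact Ht. apply test; auto. }
  assert (E2 : forall t, inI a b t -> 2 * nu + 2 * nu * (P t * P t + y t * Q t) - 2 * eta * Q t = 0).
  { intros t Ht. eapply deriv_zero_on. exact E1. exact Ht.
    auto_derive. side.
    change (Derive (fun x0 => y x0) t) with (Derive y t).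
    change (Derive (fun x0 => P x0) t) with (Derive P t).
    rewrite (is_derive_unique _ _ _ (dy _ Ht)), (is_derive_unique _ _ _ (dP _ Ht)). ring. }
  assert (E3 : 2 * nu * (3 * P x * Q x + y x * T x) - 2 * eta * T x = 0).
  { eapply deriv_zero_on. exact E2. exact Hx.
    auto_derive. side.
    change (Derive (fun x0 => y x0) x) with (Derive y x).
    change (Derive (fun x0 => P x0) x) with (Derive P x).
    change (Derive (fun x0 => Q x0) x) with (Derive Q x).
    rewrite (is_derive_unique _ _ _ (dy _ Hx)), (is_derive_unique _ _ _ (dP _ Hx)),
      (is_derive_unique _ _ _ (dQ _ Hx)). ring. }
  pose proof (onepp (P x)) as Hp.
  destruct (Req_dec (nu * y x - eta) 0) as [HW|HW].
  - exfalso. pose proof (E2 x Hx) as E2x.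
    assert (Hnu : nu * (1 + P x ^ 2) = 0) by nra.
    apply Rmult_integral in Hnu. destruct Hnu as [Hnu|Hnu]; [|lra]. subst nu.
    assert (eta = 0) by lra. subst eta.
    pose proof (E1 x Hx). assert (xi = 0) by lra. subst xi.
    pose proof (HG x Hx). assert (mu = 0) by lra. subst mu. apply Hnz; reflexivity.
  - assert (HT : T x = - 3 * nu * P x * Q x / (nu * y x - eta)).
    { apply (Rmult_eq_reg_r (nu * y x - eta)); [|auto]. unfold Rdiv.
      rewrite Rmult_assoc, Rinv_l, Rmult_1_r by auto. nra. }
    pose proof (E2 x Hx) as E2x.
    assert (HQ : Q x = - nu * (1 + P x ^ 2) / (nu * y x - eta)).
    { apply (Rmult_eq_reg_r (nu * y x - eta)); [|auto]. unfold Rdiv.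
      rewrite Rmult_assoc, Rinv_l, Rmult_1_r by auto. nra. }
    rewrite HT, HQ. field. split; auto. lra.
Qed.

Lemma fwd_core : (forall t, inI a b t -> T t = 3 * P t * Q t ^ 2 / (1 + P t ^ 2)) ->
  exists nu xi eta mu : R, (nu, xi, eta, mu) <> (0, 0, 0, 0) /\
    forall x, inI a b x -> nu * (x ^ 2 + (y x) ^ 2) - 2 * xi * x - 2 * eta * y x + mu = 0.
Proof.
  intros HT.
  destruct (Classical_Prop.classic (exists x0, inI a b x0)) as [[x0 Hx0]|Hno].
  2:{ exists 1, 0, 0, 0. split. intro H; injection H; intros; lra.
      intros x Hx. exfalso; apply Hno; eauto. }
  set (Z := fun t => Q t ^ 2 / (1 + P t ^ 2) ^ 3).
  assert (HZ : forall t, inI a b t -> Z t = Z x0).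
  { intros t Ht. apply (const_on a b); auto. intros s Hs. unfold Z.
    pose proof (onepp (P s)).
    auto_derive. side. assert (0 < 1 + P s * (P s * 1)) by nra.
    apply Rgt_not_eq. repeat apply Rmult_lt_0_compat; lra.
    change (Derive (fun x0 => P x0) s) with (Derive P s).
    change (Derive (fun x0 => Q x0) s) with (Derive Q s).
    rewrite (is_derive_unique _ _ _ (dP _ Hs)), (is_derive_unique _ _ _ (dQ _ Hs)).
    rewrite (HT s Hs). field. lra. }
  destruct (Req_dec (Q x0) 0) as [Hq0|Hq0].
  - assert (HQ : forall t, inI a b t -> Q t = 0).
    { intros t Ht. pose proof (HZ t Ht) as H. unfold Z in H. rewrite Hq0 in H.
      pose proof (onepp (P t)).
      assert (Hd : 0 < (1 + P t ^ 2) ^ 3) by (apply pow_lt; lra).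
      assert (Q t ^ 2 = 0).
      { replace (0 ^ 2 / (1 + P x0 ^ 2) ^ 3) with 0 in H by (field; pose proof (onepp (P x0)); apply Rgt_not_eq; lra).
        apply (Rmult_eq_reg_r (/ (1 + P t ^ 2) ^ 3)). rewrite Rmult_0_l. exact H.
        apply Rinv_neq_0_compat; lra. }
      nra. }
    assert (HP : forall t, inI a b t -> P t = P x0).
    { intros t Ht. apply (const_on a b); auto. intros s Hs. rewrite <- (HQ s Hs). apply dP; auto. }
    assert (HL : forall t, inI a b t -> y t - P x0 * t = y x0 - P x0 * x0).
    { intros t Ht. apply (const_on a b (fun t => y t - P x0 * t)); auto. intros s Hs.
      auto_derive. side. change (Derive (fun x0 => y x0) s) with (Derive y s).
      rewrite (is_derive_unique _ _ _ (dy _ Hs)), (HP s Hs). ring. }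
    exists 0, (- P x0 / 2), (1/2), (y x0 - P x0 * x0). split.
    + intro H; injection H; intros; lra.
    + intros x Hx. pose proof (HL x Hx). field_simplify. lra.
  - assert (HQ : forall t, inI a b t -> Q t <> 0).
    { intros t Ht Hqt. pose proof (HZ t Ht) as H. unfold Z in H. rewrite Hqt in H.
      pose proof (onepp (P x0)). pose proof (onepp (P t)).
      assert (0 < Q x0 ^ 2 / (1 + P x0 ^ 2) ^ 3).
      { apply Rdiv_lt_0_compat. apply pow2_gt_0; auto. apply pow_lt; lra. }
      replace (0 ^ 2 / (1 + P t ^ 2) ^ 3) with 0 in H by (field; apply Rgt_not_eq; lra). lra. }
    set (Xc := fun t => t - P t * (1 + P t ^ 2) / Q t).
    set (Yc := fun t => y t + (1 + P t ^ 2) / Q t).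
    assert (HX : forall t, inI a b t -> Xc t = Xc x0).
    { intros t Ht. apply (const_on a b); auto. intros s Hs. unfold Xc.
      pose proof (onepp (P s)). pose proof (HQ s Hs).
      auto_derive. side.
      change (Derive (fun x0 => P x0) s) with (Derive P s).
      change (Derive (fun x0 => Q x0) s) with (Derive Q s).
      rewrite (is_derive_unique _ _ _ (dP _ Hs)), (is_derive_unique _ _ _ (dQ _ Hs)).
      rewrite (HT s Hs). field. split; lra. }
    assert (HY : forall t, inI a b t -> Yc t = Yc x0).
    { intros t Ht. apply (const_on a b); auto. intros s Hs. unfold Yc.
      pose proof (onepp (P s)). pose proof (HQ s Hs).
      auto_derive. side.
      change (Derive (fun x0 => y x0) s) with (Derive y s).
      change (Derive (fun x0 => P x0) s) with (Derive P s).
      change (Derive (fun x0 => Q x0) s) with (Derive Q s).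
      rewrite (is_derive_unique _ _ _ (dy _ Hs)), (is_derive_unique _ _ _ (dP _ Hs)), (is_derive_unique _ _ _ (dQ _ Hs)).
      rewrite (HT s Hs). field. split; lra. }
    exists 1, (Xc x0), (Yc x0), (Xc x0 ^ 2 + Yc x0 ^ 2 - / Z x0). split.
    + intro H; injection H; intros; lra.
    + intros x Hx. rewrite <- (HX x Hx), <- (HY x Hx), <- (HZ x Hx).
      unfold Xc, Yc, Z. pose proof (onepp (P x)). pose proof (HQ x Hx).
      field. split; [lra|auto].
Qed.
End Core.

Lemma part3 l : 0 < l -> loc_equiv_split Mdom X3 (X4 l) J2 vert (totD Fode).
Proof.
  intros hl m Hm. destruct (part1 l hl m Hm) as [V [W [G [HVm [HVM Hd]]]]].
  exists V, W, (Phi l), G. split; auto. split; auto. split. intros; exact I.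
  split; auto. intros p Hp. apply carries; auto.
Qed.

Theorem mainTheorem2 (l : R) (hl : 0 < l) :
  (* Phi is a local diffeomorphism on M = {cos alpha <> 0, cos beta <> 0} *)
  (forall m, Mdom m ->
     exists V W G, V m /\ (forall p, V p -> Mdom p) /\ local_diffeo V W (Phi l) G)
  (* dPhi maps Span(X3) to Span(d_q) and Span(X4) to Span(total derivative) *)
  /\ carries_split Mdom (Phi l) X3 (X4 l) vert (totD Fode)
  (* hence the two Engel structures with split are locally equivalent *)
  /\ loc_equiv_split Mdom X3 (X4 l) J2 vert (totD Fode)
  (* every solution lies on a circle or a line ... *)
  /\ (forall (a b : Rbar) (y : R -> R), solves_ode Fode a b y ->
        exists nu xi eta mu, (nu, xi, eta, mu) <> (0, 0, 0, 0) /\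
          forall x : R, Rbar_lt a x -> Rbar_lt x b ->
            nu * (x ^ 2 + (y x) ^ 2) - 2 * xi * x - 2 * eta * y x + mu = 0)
  (* ... and conversely every such (C^3) curve is a solution *)
  /\ (forall (a b : Rbar) (y : R -> R) (nu xi eta mu : R),
        (nu, xi, eta, mu) <> (0, 0, 0, 0) -> C3_on a b y ->
        (forall x : R, Rbar_lt a x -> Rbar_lt x b ->
            nu * (x ^ 2 + (y x) ^ 2) - 2 * xi * x - 2 * eta * y x + mu = 0) ->
        solves_ode Fode a b y).
Proof.
  split; [apply part1; auto|].
  split; [apply carries; auto|].
  split; [apply part3; auto|].
  split.
  - intros a b y [HC Hs].
    destruct (fwd_core a b y (Derive_n y 1) (Derive_n y 2) (Derive_n y 3)) as [nu [xi [eta [mu [Hnz Heq]]]]].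
    + intros t [H1 H2]. destruct (HC t H1 H2) as [E1 [E2 E3]]. apply Derive_correct. exact E1.
    + intros t [H1 H2]. destruct (HC t H1 H2) as [E1 [E2 E3]]. apply Derive_correct. exact E2.
    + intros t [H1 H2]. destruct (HC t H1 H2) as [E1 [E2 E3]]. apply Derive_correct. exact E3.
    + intros t [H1 H2]. rewrite (Hs t H1 H2). reflexivity.
    + exists nu, xi, eta, mu. split; auto. intros x H1 H2. apply Heq. split; auto.
  - intros a b y nu xi eta mu Hnz HC HG. split; auto. intros x H1 H2.
    transitivity (3 * Derive_n y 1 x * Derive_n y 2 x ^ 2 / (1 + Derive_n y 1 x ^ 2)); [|reflexivity].
    apply (conv_core a b y (Derive_n y 1) (Derive_n y 2) (Derive_n y 3)) with nu xi eta mu; auto.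
    + intros t [G1 G2]. destruct (HC t G1 G2) as [E1 [E2 E3]]. apply Derive_correct. exact E1.
    + intros t [G1 G2]. destruct (HC t G1 G2) as [E1 [E2 E3]]. apply Derive_correct. exact E2.
    + intros t [G1 G2]. destruct (HC t G1 G2) as [E1 [E2 E3]]. apply Derive_correct. exact E3.
    + intros t [G1 G2]. apply HG; auto.
    + split; auto.
Qed.
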